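(* Fix integers $t\ge1$, $C_1,\dots,C_t\ge1$, and $A_i,B_i$ with $0\le A_i\le C_i/2$, $0\le B_i\le C_i/2$ for all $i$, and an integer $m$. For each integer $N$ let $S_N$ be the set of tuples $(\mu_1,\dots,\mu_t;d_1,\dots,d_t)\in P^t\times\mathbb Z^t$ with $\sum_i d_i$ odd and $\sum_i C_i|\mu_i|+\sum_iC_i\binom{d_i}{2}+\sum_iA_id_i=N$, and let $T_N$ be the set of tuples $(\alpha_1,\dots,\alpha_t;e_1,\dots,e_t)\in P^t\times\mathbb Z^t$ with $\sum_ie_i$ odd and $\sum_iC_i|\alpha_i|+\sum_iC_i\binom{e_i}{2}+\sum_iB_ie_i+m=N$. Assume $m$ is such that the smallest $N$ with $T_N\neq\emptyset$ equals the second smallest $N$ with $S_N\ne\emptyset$. Let $k$ be the smallest $N$ with $S_N\ne\emptyset$. For each $N$ define $$u_N=\#\Big\{(d_1,\dots,d_t)\in\mathbb Z^t:\ \textstyle\sum d_i\text{ odd},\ \sum_iC_i\binom{d_i}{2}+\sum_iA_id_i=N\Big\}+|S_k|\cdot\#\Big\{(f_1,\dots,f_t)\in\mathbb Z^t:\ \textstyle\sum f_i\text{ odd},\ \sum_iC_i\frac{f_i(3f_i-1)}{2}+k=N\Big\},$$ $$v_N=\#\Big\{(e_1,\dots,e_t)\in\mathbb Z^t:\ \textstyle\sum e_i\text{ odd},\ \sum_iC_i\binom{e_i}{2}+\sum_iB_ie_i+m=N\Big\}+|S_k|\cdot\#\Big\{(f_1,\dots,f_t)\in\mathbb Z^t:\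 \textstyle\sum f_i\text{ even},\ \sum_iC_i\frac{f_i(3f_i-1)}{2}+k=N\Big\}.$$ (These are the cardinalities of the sets $U_N$, $V_N$ formed as disjoint unions of the first set with $|S_k|$ copies of the second set.) Then $|S_N|=|T_N|$ for all $N>k$ if and only if $u_N=v_N$ for all integers $N$.
   Context: $P$ denotes the set of all integer partitions into positive parts (including the empty partition); for a partition $\lambda$, $|\lambda|$ is the sum of its parts. For $d\in\mathbb Z$, $\binom{d}{2}=d(d-1)/2$. *)

(* Defs.v *)
From HB Require Import structures.
From mathcomp Require Import all_boot all_order all_algebra.
From Stdlib Require Import ClassicalEpsilon.
Set Implicit Arguments. Unset Strict Implicit. Unset Printing Implicit Defensive.
Import Order.TTheory GRing.Theory Num.Theory.
Local Open Scope ring_scope.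

Definition is_partition (s : seq nat) : bool :=
  sorted geq s && all (fun x => (0 < x)%N) s.

Definition binom2 (d : int) : int := ((d * (d - 1)) %/ 2)%Z.
Definition pent (f : int) : int := ((f * (3 * f - 1)) %/ 2)%Z.

Definition has_card (X : eqType) (P : X -> Prop) (n : nat) : Prop :=
  exists s : seq X, [/\ uniq s, size s = n & forall x, P x <-> x \in s].
Definition ncard (X : eqType) (P : X -> Prop) : nat :=
  epsilon (inhabits 0%N) (has_card P).

Definition is_least (P : int -> Prop) (n : int) : Prop :=
  P n /\ forall j, P j -> n <= j.
Definition is_second_least (P : int -> Prop) (n : int) : Prop :=
  P n /\ exists k, [/\ is_least P k, k < n & forall j, P j -> j != k -> n <= j].

(* The set {(mu;d) in P^t x Z^t : sum d odd, sum C|mu| + sum C binom(d,2) + sum A d + c = N}.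
   S_N = PDset C A 0 N, T_N = PDset C B m N. *)
Definition PDset (t : nat) (C A : 'I_t -> int) (c N : int)
    (x : {ffun 'I_t -> seq nat} * {ffun 'I_t -> int}) : Prop :=
  [/\ forall i, is_partition (x.1 i),
      ~~ (2 %| \sum_(i < t) x.2 i)%Z
    & \sum_(i < t) C i * (sumn (x.1 i))%:Z + \sum_(i < t) C i * binom2 (x.2 i)
        + \sum_(i < t) A i * x.2 i + c = N].

Definition Dset (t : nat) (C A : 'I_t -> int) (c N : int) (d : {ffun 'I_t -> int}) : Prop :=
  ~~ (2 %| \sum_(i < t) d i)%Z /\
  \sum_(i < t) C i * binom2 (d i) + \sum_(i < t) A i * d i + c = N.

Definition Fset (t : nat) (C : 'I_t -> int) (odd_par : bool) (k N : int)
    (f : {ffun 'I_t -> int}) : Prop :=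
  (~~ (2 %| \sum_(i < t) f i)%Z = odd_par) /\
  \sum_(i < t) C i * pent (f i) + k = N.

Definition u_N (t : nat) (C A : 'I_t -> int) (k N : int) : nat :=
  (ncard (Dset C A 0 N) + ncard (PDset C A 0 k) * ncard (Fset C true k N))%N.
Definition v_N (t : nat) (C A B : 'I_t -> int) (m k N : int) : nat :=
  (ncard (Dset C B m N) + ncard (PDset C A 0 k) * ncard (Fset C false k N))%N.

(* Main.v *)
Require Import Defs.
From HB Require Import structures.
From mathcomp Require Import all_boot all_order all_algebra.
From mathcomp Require Import zify ring lra.
From Stdlib Require Import ClassicalEpsilon FunctionalExtensionality PropExtensionality.
Import Order.TTheory GRing.Theory Num.Theory.
Set Implicit Arguments. Unset Strict Implicit. Unset Printing Implicit Defensive.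
Local Open Scope ring_scope.

Lemma has_cardE (X : eqType) (P : X -> Prop) n : has_card P n -> ncard P = n.
Proof.
move=> H; rewrite /ncard.
have := epsilon_spec (inhabits 0%N) (has_card P) (ex_intro _ n H).
move: (epsilon _ _) => n' [s' [u' <- H']].
case: H => s [u <- H].
apply/perm_size/uniq_perm => // x.
apply/idP/idP => Hx; [apply/(H x); apply/(H' x) | apply/(H' x); apply/(H x)] => //.
Qed.

Lemma ncard_seq (X : eqType) (P : X -> Prop) (s : seq X) (p : pred X) :
  uniq s -> (forall x, P x <-> (x \in s) && p x) -> ncard P = count p s.
Proof.
move=> us H; apply: has_cardE; exists (filter p s); split.
- exact: filter_uniq.
- by rewrite size_filter.
- by move=> x; rewrite mem_filter andbC.
Qed.

Lemma ncard0 (X : eqType) (P : X -> Prop) : (forall x, ~ P x) -> ncard P = 0%N.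
Proof.
move=> H; apply: has_cardE; exists [::]; split => // x; split => //.
by move/H.
Qed.

Lemma ncard_ext (X : eqType) (P Q : X -> Prop) : (forall x, P x <-> Q x) -> ncard P = ncard Q.
Proof.
move=> H; have -> // : P = Q.
by apply: functional_extensionality => x; apply: propositional_extensionality.
Qed.
Definition UI (M : nat) : seq int := [seq (Posz i - Posz M) | i <- iota 0 (M + M).+1].

Lemma UI_uniq M : uniq (UI M).
Proof.
rewrite map_inj_uniq ?iota_uniq // => i j H; lia.
Qed.

Lemma mem_UI M (z : int) : `|z| <= M%:Z -> z \in UI M.
Proof.
move=> H; apply/mapP; exists (absz (z + M%:Z)).
  rewrite mem_iota; lia.
lia.
Qed.

Fixpoint seqs_upto (l : nat) (vals : seq nat) : seq (seq nat) :=
  match l with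
  | 0%N => [:: [::]]
  | l'.+1 => [::] :: [seq x :: s | x <- vals, s <- seqs_upto l' vals]
  end.

Lemma seqs_upto_uniq l vals : uniq vals -> uniq (seqs_upto l vals).
Proof.
move=> uv; elim: l => //= l IH; apply/andP; split.
  by apply/negP => /allpairsP [[x s] [_ _ /=]].
apply: allpairs_uniq => // -[x s] [y s'] _ _ /= [-> ->] //.
Qed.

Lemma mem_seqs_upto l vals s : (size s <= l)%N -> all (mem vals) s -> s \in seqs_upto l vals.
Proof.
elim: l s => [|l IH] [|x s] //= Hs /andP [xv sv].
rewrite in_cons; apply/orP; right; apply/allpairsP; exists (x, s) => /=.
by split => //; apply: IH.
Qed.

Definition UL (M : nat) := seqs_upto M (iota 1 M).

Lemma UL_uniq M : uniq (UL M).
Proof. exact/seqs_upto_uniq/iota_uniq. Qed.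

Lemma size_le_sumn (s : seq nat) : all (fun x => 0 < x)%N s -> (size s <= sumn s)%N.
Proof. elim: s => //= x s IH /andP [x0 /IH]; lia. Qed.

Lemma mem_le_sumn (s : seq nat) x : x \in s -> (x <= sumn s)%N.
Proof. elim: s => //= y s IH; rewrite in_cons => /orP [/eqP ->|/IH]; lia. Qed.

Lemma mem_UL M (s : seq nat) : is_partition s -> (sumn s <= M)%N -> s \in UL M.
Proof.
case/andP => _ pos HM; apply: mem_seqs_upto.
  by apply: leq_trans (size_le_sumn pos) HM.
apply/allP => x xs; change (x \in iota 1 M); rewrite mem_iota.
have := allP pos x xs; have := mem_le_sumn xs; lia.
Qed.

Section UF.
Variable t : nat.
Variable X : choiceType.

Definition UF (e : seq X) : seq {ffun 'I_t -> X} :=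
  map (fun g : {ffun 'I_t -> seq_sub e} => [ffun i => ssval (g i)]) (enum {: {ffun 'I_t -> seq_sub e}}).

Lemma UF_uniq e : uniq (UF e).
Proof.
rewrite map_inj_uniq ?enum_uniq // => g g' /ffunP H.
apply/ffunP => i; have := H i; rewrite !ffunE => /val_inj //.
Qed.

Lemma mem_UF e (f : {ffun 'I_t -> X}) : (forall i, f i \in e) -> f \in UF e.
Proof.
move=> H; apply/mapP; exists [ffun i => (SeqSub (H i) : seq_sub e)].
  by rewrite mem_enum.
by apply/ffunP => i; rewrite !ffunE.
Qed.
End UF.
Lemma even_mul_pred (z : int) : (2 %| z * (z - 1))%Z.
Proof.
have [q r] := (divz_eq z 2, modz_ge0 z (isT : (2:int) != 0)).
have r2 := ltz_pmod z (isT : (0 < 2 :> int)).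
move: (z %/ 2)%Z (z %% 2)%Z q r r2 => q' r' -> r0 r2.
apply/dvdzP.
have [->|->] : r' = 0 \/ r' = 1 by lia.
  by exists (q' * (q' * 2 - 1)); ring.
by exists (q' * (q' * 2 + 1)); ring.
Qed.

Lemma binom2E d : binom2 d * 2 = d * (d - 1).
Proof. by rewrite /binom2 divzK // even_mul_pred. Qed.

Lemma pentE f : pent f * 2 = f * (3 * f - 1).
Proof.
rewrite /pent divzK //.
have /dvdzP [q Hq] := even_mul_pred f.
apply/dvdzP; exists (q + f * f).
have -> : f * (3 * f - 1) = f * (f - 1) + (f * f) * 2 by ring.
by rewrite Hq; ring.
Qed.

Lemma pent_ge f : `|f|%:Z <= pent f.
Proof. have := pentE f; nia. Qed.

Lemma pent_ge0 f : 0 <= pent f.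
Proof. have := pent_ge f; lia. Qed.

Lemma pent_eq0 f : pent f = 0 -> f = 0.
Proof. have := pent_ge f; lia. Qed.

Lemma pentS f : pent (f + 1) = pent f + 3 * f + 1.
Proof. have := pentE f; have := pentE (f + 1); nia. Qed.

Lemma pentP f : pent (f - 1) = pent f - 3 * f + 2.
Proof. have := pentE f; have := pentE (f - 1); nia. Qed.

Lemma dd1_ge0 (d : int) : 0 <= d * (d - 1).
Proof. have [d0|d0] := lerP 1 d; nia. Qed.

Lemma term_aux (X Cc d : int) : 0 <= X -> 2 * X <= Cc -> 1 <= Cc ->
  (Cc * binom2 d + X * d) * 2 = Cc * (d * (d - 1)) + 2 * X * d.
Proof. move=> *; rewrite -binom2E; ring. Qed.

Lemma term_ge0 (X Cc d : int) : 0 <= X -> 2 * X <= Cc -> 1 <= Cc ->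
  0 <= Cc * binom2 d + X * d.
Proof.
move=> X0 XC C1; have E := term_aux d X0 XC C1; have D1 := dd1_ge0 d.
have [d0|d0] := lerP 0 d.
  have h1 : 0 <= Cc * (d * (d - 1)) by apply: mulr_ge0; lia.
  have h2 : 0 <= X * d by apply: mulr_ge0.
  lia.
have h1 : 0 <= (Cc - 2 * X) * (- d) by apply: mulr_ge0; lia.
have h2 : 0 <= Cc * (d * d) by apply: mulr_ge0; nia.
nia.
Qed.

Lemma term_ge (X Cc d : int) : 0 <= X -> 2 * X <= Cc -> 1 <= Cc ->
  `|d|%:Z - 1 <= Cc * binom2 d + X * d.
Proof.
move=> X0 XC C1; have E := term_aux d X0 XC C1; have D1 := dd1_ge0 d.
have [d0|d0] := lerP 0 d.
  have h1 : d * (d - 1) <= Cc * (d * (d - 1)) by rewrite ler_peMl //; apply: dd1_ge0.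
  have h2 : 0 <= X * d by apply: mulr_ge0.
  have h3 : 2 * (d - 1) <= d * (d - 1) by nia.
  lia.
have h1 : 0 <= (Cc - 2 * X) * (- d) by apply: mulr_ge0; lia.
have h2 : d * d <= Cc * (d * d) by rewrite ler_peMl //; nia.
nia.
Qed.
Lemma geq_trans : transitive geq.
Proof. move=> x y z /= h1 h2; exact: leq_trans h2 h1. Qed.

Lemma is_partitionE l : is_partition l = pairwise geq l && all (fun x => 0 < x)%N l.
Proof. by rewrite /is_partition sorted_pairwise //; exact: geq_trans. Qed.

Lemma part_cons x l : is_partition (x :: l) ->
  [/\ is_partition l, (0 < x)%N & all (fun y => y <= x)%N l].
Proof.
rewrite !is_partitionE pairwise_cons /= => /andP [/andP [a b] /andP [c d]].
by split => //; rewrite ?b ?d.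
Qed.

Lemma sumn_filter_pos s : sumn [seq x <- s | (0 < x)%N] = sumn s.
Proof. by elim: s => //= x s IH; case: x => //= x; rewrite IH. Qed.

Lemma sumn_pred s : all (fun x => 0 < x)%N s ->
  (sumn (map predn s))%:Z = (sumn s)%:Z - (size s)%:Z.
Proof. elim: s => //= x s IH /andP [x0 /IH h]; rewrite -[(predn x + _)%N]/(addn _ _); lia. Qed.

Lemma sumn_mapS s : sumn (map S s) = (sumn s + size s)%N.
Proof. elim: s => //= x s ->; lia. Qed.

Lemma sumn_behead l : (head 0 l + sumn (behead l))%N = sumn l.
Proof. by case: l. Qed.

Lemma filter_pred_pos l :
  [seq x <- map predn l | (0 < x)%N] = map predn [seq x <- l | (1 < x)%N].
Proof. by elim: l => //= x l ->; case: x => // -[]. Qed.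

Lemma split_ones l : is_partition l ->
  [seq x <- l | (1 < x)%N] ++ nseq (size l - size [seq x <- l | (1 < x)%N]) 1%N = l.
Proof.
elim: l => //= x l IH /part_cons [pl x0 al].
case: ifP => x1 /=.
  by rewrite subSS IH.
have x_1 : x = 1%N by lia.
have -> : [seq y <- l | (1 < y)%N] = [::].
  apply/eqP; rewrite -[_ == _]negbK -has_filter; apply/hasP => -[y yl].
  have := allP al y yl; lia.
rewrite subn0 x_1 /=; congr cons.
have pl' := pl; rewrite is_partitionE in pl'; case/andP: pl' => _ pos.
elim: l {IH x0 al pl x1} (al) pos => //= y l IH /andP [y1 al] /andP [y0 pos].
rewrite IH //; congr cons; rewrite x_1 in y1; lia.
Qed.

Definition posf (s : seq nat) := filter (fun x => 0 < x)%N s.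
Arguments posf : simpl never.

Definition phi1 (p : int * seq nat) : int * seq nat :=
  let f := p.1 in let l := p.2 in
  if (head 0%N l)%:Z <= (size l)%:Z - 3 * f then
    (f + 1, posf (absz ((size l)%:Z - 3 * f - 1)%R :: map predn l))
  else
    (f - 1, map S (behead l) ++
              nseq (absz ((head 0%N l)%:Z + 3 * f - 2 - (size (behead l))%:Z)%R) 1%N).

Definition wt1 (p : int * seq nat) : int := (sumn p.2)%:Z + pent p.1.
Lemma head_ge l y : is_partition l -> y \in l -> (y <= head 0 l)%N.
Proof.
case: l => //= x l /part_cons [_ _ al]; rewrite in_cons => /orP [/eqP ->//|yl].
exact: (allP al).
Qed.

Lemma part_pos l y : is_partition l -> y \in l -> (0 < y)%N.
Proof. by rewrite is_partitionE => /andP [_ /allP h] /h. Qed.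

Lemma part_behead l : is_partition l -> is_partition (behead l).
Proof. by case: l => // x l /part_cons []. Qed.

Lemma pairwise_nseq (T : Type) (r : rel T) n x : r x x -> pairwise r (nseq n x).
Proof.
move=> rxx; elim: n => //= n IH; rewrite IH andbT all_nseq rxx orbT //.
Qed.

Lemma phi1_part p : is_partition p.2 -> is_partition (phi1 p).2.
Proof.
case: p => f l /= pl; rewrite /phi1 /=; case: ifP => H /=; rewrite /posf.
  rewrite is_partitionE; apply/andP; split; last exact: filter_all.
  rewrite -sorted_pairwise; last exact: geq_trans.
  apply: sorted_filter; first exact: geq_trans.
  rewrite sorted_pairwise; last exact: geq_trans.
  rewrite pairwise_cons all_map pairwise_map; apply/andP; split.
    apply/allP => y yl /=; have := head_ge pl yl; have := part_pos pl yl; lia.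
  have := pl; rewrite is_partitionE => /andP [pw _].
  by apply: sub_pairwise pw => x y /=; lia.
rewrite /= is_partitionE pairwise_cat all_cat; apply/andP; split; [apply/and3P; split|].
- apply/allrelP => x y /mapP [z _ ->] /nseqP [-> _] //.
- have := part_behead pl; rewrite is_partitionE => /andP [pw _].
  rewrite pairwise_map; apply: sub_pairwise pw => x y /=; lia.
- exact: pairwise_nseq.
- rewrite all_map; apply/andP; split; first by apply/allP.
  by apply/allP => y /nseqP [-> _].
Qed.

Lemma sumn_nseq1 r : sumn (nseq r 1%N) = r.
Proof. by rewrite sumn_nseq mul1n. Qed.

Lemma phi1_wt p : is_partition p.2 -> p != (0, [::]) -> wt1 (phi1 p) = wt1 p.
Proof.
case: p => f l /= pl nz; rewrite /phi1 /wt1 /=; case: ifP => H /=.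
  have a0 : 0 <= (size l)%:Z - 3 * f - 1.
    move: nz H; case: l pl => [|x l] pl /=.
      move=> nz H; have fn : f != 0 by apply: contra nz => /eqP ->.
      lia.
    by have := part_cons pl; case => _ x0 _ _; lia.
  rewrite /posf sumn_filter_pos /= pentS.
  have pl' := pl; rewrite is_partitionE in pl'; case/andP: pl' => _ pos.
  have h := sumn_pred pos; rewrite -[(_ + sumn _)%N]/(addn _ _); lia.
have r0 : 0 <= (head 0%N l)%:Z + 3 * f - 2 - (size (behead l))%:Z.
  by clear nz; move: H; case: l pl => [|x l] pl /=; lia.
rewrite sumn_cat sumn_mapS sumn_nseq1 pentP size_behead.
have := sumn_behead l; rewrite size_behead in r0; lia.
Qed.
Lemma phi1_fst p : (phi1 p).1 = p.1 + 1 \/ (phi1 p).1 = p.1 - 1.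
Proof. by rewrite /phi1; case: ifP; [left|right]. Qed.

Lemma head_beh_le l r : is_partition l ->
  (head 0%N (map S (behead l) ++ nseq r 1%N) <= (head 0%N l).+1)%N.
Proof.
case: l => [|x [|y l]] /=; try by case: r.
by case/part_cons => _ _ /andP [].
Qed.

Lemma phi1K p : is_partition p.2 -> p != (0, [::]) -> phi1 (phi1 p) = p.
Proof.
case: p => f l /= pl nz; rewrite {2}/phi1 /=; case: ifP => H.
  have a0 : 0 <= (size l)%:Z - 3 * f - 1.
    move: nz H; case: l pl => [|x l] pl /=.
      move=> nz H; have fn : f != 0 by apply: contra nz => /eqP ->.
      lia.
    by have := part_cons pl; case => _ x0 _ _; lia.
  have c2l : (size [seq x <- l | (1 < x)%N] <= size l)%N.
    by rewrite size_filter count_size.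
  rewrite /posf /= filter_pred_pos.
  case: ifP => ha.
    rewrite /phi1 /= size_map.
    rewrite ifF; last by lia.
    congr pair; first by rewrite addrK.
    rewrite -map_comp map_id_in; last by move=> x; rewrite mem_filter /=; lia.
    rewrite -[RHS](split_ones pl); congr (_ ++ nseq _ _); lia.
  have nil1 : [seq x <- l | (1 < x)%N] = [::].
    apply/eqP; rewrite -[_ == _]negbK -has_filter; apply/hasP => -[y yl].
    have := head_ge pl yl; lia.
  rewrite nil1 /= /phi1 /=; rewrite ifF; last by lia.
  congr pair; first by rewrite addrK.
  rewrite -[RHS](split_ones pl) nil1 /=; congr nseq; lia.
have r0 : 0 <= (head 0%N l)%:Z + 3 * f - 2 - (size (behead l))%:Z.
  by clear nz; move: H; case: l pl => [|x l] pl /=; lia.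
have hb := head_beh_le
  (absz ((head 0%N l)%:Z + 3 * f - 2 - (size (behead l))%:Z)%R) pl.
rewrite /phi1 /= size_cat size_map size_nseq.
rewrite ifT; last by lia.
congr pair; first by rewrite subrK.
rewrite /posf map_cat -map_comp map_id map_nseq /= filter_cat filter_nseq /= cats0.
have -> : absz ((size (behead l) + absz ((head 0%N l)%:Z + 3 * f - 2 - (size (behead l))%:Z)%R)%N%:Z - 3 * (f - 1) - 1)%R = head 0%N l by lia.
case: l pl {H r0 hb nz} => [|x l] pl //=.
have [_ x0 _] := part_cons pl; rewrite x0; congr cons.
apply/all_filterP; have := part_cons pl; case => pl' _ _.
by rewrite is_partitionE in pl'; case/andP: pl'.
Qed.
Lemma odd_succ (z : int) : (2 %| z + 1)%Z = ~~ (2 %| z)%Z.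
Proof.
apply/idP/idP.
  move/dvdzP => [q Hq]; apply/negP => /dvdzP [q' Hq']; lia.
move=> H; have e := divz_eq z 2.
have r0 := modz_ge0 z (isT : (2:int) != 0).
have r2 := ltz_pmod z (isT : (0 < 2 :> int)).
have [r00|r01] : (z %% 2)%Z = 0 \/ (z %% 2)%Z = 1 by lia.
  by move/negP: H => H; exfalso; apply: H; apply/dvdz_mod0P.
apply/dvdzP; exists ((z %/ 2)%Z + 1); lia.
Qed.

Lemma odd_pred (z : int) : (2 %| z - 1)%Z = ~~ (2 %| z)%Z.
Proof. by have := odd_succ (z - 1); rewrite subrK => ->; rewrite negbK. Qed.

Lemma wt1_ge0 f l : 0 <= wt1 (f, l).
Proof. by rewrite /wt1 /=; have := pent_ge0 f; lia. Qed.

Lemma wt1_pos f l : is_partition l -> (f, l) != (0, [::]) -> 0 < wt1 (f, l).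
Proof.
move=> pl nz; rewrite /wt1 /=; have := pent_ge0 f.
case: l pl nz => [|x l] pl nz /=.
  have fn : f != 0 by apply: contra nz => /eqP ->.
  have := pent_ge f; lia.
have [_ x0 _] := part_cons pl; lia.
Qed.

Definition ind (b : bool) : int := if b then 1 else 0.

Lemma ind_and a b : ind (a && b) = ind a * ind b.
Proof. by case: a; case: b; rewrite /ind /= ?mul1r ?mul0r. Qed.

Lemma count_ind (X : Type) (p : pred X) (s : seq X) :
  (count p s)%:Z = \sum_(x <- s) ind (p x).
Proof.
elim: s => [|x s IH]; first by rewrite big_nil.
by rewrite big_cons /= -IH /ind; case: (p x) => /=; lia.
Qed.

Lemma sum_ind_eq (r : seq int) (a : int) (h : int -> int) : uniq r ->
  \sum_(j <- r) ind (a == j) * h j = ind (a \in r) * h a.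
Proof.
elim: r => [|j r IH]; first by rewrite big_nil in_nil /ind mul0r.
rewrite big_cons in_cons /= => /andP [jr ur]; rewrite IH //.
case: eqP => [->|_]; last by rewrite /ind /= mul0r add0r.
by rewrite (negbTE jr) /ind /=; lia.
Qed.

Lemma big_weight (X Y : Type) (s1 : seq X) (s2 : seq Y) (w1 : X -> int) (w2 : Y -> int)
  (g1 : X -> int) (g2 : Y -> int) (N : int) (r : seq int) : uniq r ->
  \sum_(j <- r) (\sum_(x <- s1) g1 x * ind (w1 x == j)) *
                (\sum_(y <- s2) g2 y * ind (w2 y == N - j)) =
  \sum_(x <- s1) \sum_(y <- s2) g1 x * g2 y * ind (w1 x \in r) * ind (w1 x + w2 y == N).
Proof.
move=> ur.
under eq_bigr do rewrite big_distrl /=.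
rewrite exchange_big /=; apply: eq_bigr => x _.
under eq_bigr do rewrite big_distrr /=.
rewrite exchange_big /=; apply: eq_bigr => y _.
have -> : \sum_(j <- r) g1 x * ind (w1 x == j) * (g2 y * ind (w2 y == N - j)) =
   \sum_(j <- r) ind (w1 x == j) * (g1 x * g2 y * ind (w2 y == N - j)).
  by apply: eq_bigr => j _; ring.
rewrite sum_ind_eq //.
have -> : (w2 y == N - w1 x) = (w1 x + w2 y == N).
  by apply/eqP/eqP; lia.
ring.
Qed.

Lemma inv_sum (X : eqType) (s : seq X) (phi : X -> X) (g : X -> int) : uniq s ->
  (forall x, x \in s -> phi x \in s) -> (forall x, x \in s -> phi (phi x) = x) ->
  (forall x, x \in s -> g (phi x) = - g x) -> \sum_(x <- s) g x = 0.
Proof.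
move=> us Hin Hk Hg.
have pe : perm_eq s (map phi s).
  apply: uniq_perm => //.
    rewrite map_inj_in_uniq // => x y xs ys E.
    by rewrite -(Hk x xs) E Hk.
  move=> x; apply/idP/mapP => [xs|[y ys ->]]; last exact: Hin.
  by exists (phi x); [apply: Hin | rewrite Hk].
have : \sum_(x <- s) g x = - \sum_(x <- s) g x.
  rewrite {1}(perm_big _ pe) big_map -sumrN big_seq_cond [RHS]big_seq_cond.
  by apply: eq_bigr => x /andP [xs _]; rewrite Hg.
lia.
Qed.
Section Multi.
Variable t : nat.
Variable C : 'I_t -> int.
Hypothesis hC : forall i, 1 <= C i.

Definition isP (mu : {ffun 'I_t -> seq nat}) := [forall i, is_partition (mu i)].
Definition wP (mu : {ffun 'I_t -> seq nat}) := \sum_(i < t) C i * (sumn (mu i))%:Z.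
Definition wF (f : {ffun 'I_t -> int}) := \sum_(i < t) C i * pent (f i).
Definition sgn (f : {ffun 'I_t -> int}) : int :=
  if ~~ (2 %| \sum_(i < t) f i)%Z then -1 else 1.
Definition nzc (x : {ffun 'I_t -> seq nat} * {ffun 'I_t -> int}) (i : 'I_t) :=
  (x.2 i, x.1 i) != (0, [::]).
Definition upd (x : {ffun 'I_t -> seq nat} * {ffun 'I_t -> int}) (i : 'I_t) (q : int * seq nat) :=
  ([ffun j => if j == i then q.2 else x.1 j], [ffun j => if j == i then q.1 else x.2 j]).
Definition Phi (x : {ffun 'I_t -> seq nat} * {ffun 'I_t -> int}) :=
  match [pick i | nzc x i] with
  | Some i => upd x i (phi1 (x.2 i, x.1 i))
  | None => x
  end.
Definition wPF (x : {ffun 'I_t -> seq nat} * {ffun 'I_t -> int}) := wP x.1 + wF x.2.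

Lemma wPFE x : wPF x = \sum_(i < t) C i * wt1 (x.2 i, x.1 i).
Proof.
rewrite /wPF /wP /wF -big_split /=; apply: eq_bigr => i _; rewrite /wt1 /=; ring.
Qed.

Lemma wPF_ge0 x : 0 <= wPF x.
Proof.
rewrite wPFE; apply: sumr_ge0 => i _; apply: mulr_ge0; last exact: wt1_ge0.
by have := hC i; lia.
Qed.

Lemma isP_upd x i q : isP x.1 -> is_partition q.2 -> isP (upd x i q).1.
Proof.
move=> /forallP H pq; apply/forallP => j; rewrite /upd /= ffunE.
by case: (eqVneq j i).
Qed.

Lemma upd_nzc x i : isP x.1 -> nzc x i ->
  nzc (upd x i (phi1 (x.2 i, x.1 i))) =1 nzc x.
Proof.
move=> /forallP H nzi j; rewrite /nzc /upd /= !ffunE.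
case: (eqVneq j i) => [->|ne]; last by [].
have nzi' : (x.2 i, x.1 i) != (0, [::]) := nzi.
rewrite nzi'; case E: (phi1 _) => [f' l'] /=.
have := @phi1_wt (x.2 i, x.1 i) (H i) nzi'; rewrite E => w.
have := wt1_pos (H i) nzi'; rewrite -w => wp.
by apply/eqP => -[f0 l0]; move: wp; rewrite f0 l0 /wt1 /= /pent.
Qed.

Lemma isP_Phi x : isP x.1 -> isP (Phi x).1.
Proof.
move=> H; rewrite /Phi; case: pickP => // i _; apply: isP_upd => //.
move/forallP: H => H; exact: (@phi1_part (x.2 i, x.1 i) (H i)).
Qed.

Lemma wPF_Phi x : isP x.1 -> wPF (Phi x) = wPF x.
Proof.
move=> H; rewrite /Phi; case: pickP => // i nzi.
rewrite !wPFE; apply: eq_bigr => j _; rewrite /upd /= !ffunE.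
case: (eqVneq j i) => [->|//]; move/forallP: H => H.
by rewrite -surjective_pairing (@phi1_wt (x.2 i, x.1 i) (H i)).
Qed.

Lemma Phi_K x : isP x.1 -> Phi (Phi x) = x.
Proof.
move=> H; case E: [pick j | nzc x j] => [i|]; last first.
  have PX : Phi x = x by rewrite /Phi E.
  by rewrite !PX.
have nzi : nzc x i by move: E; case: pickP => // j nzj [<-].
have PX : Phi x = upd x i (phi1 (x.2 i, x.1 i)) by rewrite /Phi E.
rewrite PX {1}/Phi (eq_pick (upd_nzc H nzi)) E.
have nzi' : (x.2 i, x.1 i) != (0, [::]) := nzi.
move/forallP: (H) => H'.
rewrite /upd /= !ffunE eqxx -surjective_pairing (@phi1K (x.2 i, x.1 i) (H' i) nzi') /=.
case: x {H PX E nzi nzi' H'} => mu f /=; congr pair; apply/ffunP => j; rewrite !ffunE;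
  by case: (eqVneq j i) => [->|].
Qed.

Lemma sum_upd (f : {ffun 'I_t -> int}) i a :
  \sum_(j < t) [ffun j => if j == i then a else f j] j = \sum_(j < t) f j + (a - f i).
Proof.
rewrite (bigD1 i) //= [X in _ = X + _](bigD1 i) //= ffunE eqxx.
have -> : \sum_(j < t | j != i) [ffun j => if j == i then a else f j] j =
          \sum_(j < t | j != i) f j.
  by apply: eq_bigr => j ne; rewrite ffunE (negbTE ne).
ring.
Qed.

Lemma sgn_Phi x : isP x.1 -> (exists i, nzc x i) -> sgn (Phi x).2 = - sgn x.2.
Proof.
move=> H [i0 nz0]; rewrite /Phi; case: pickP => [i nzi|]; last by move/(_ i0); rewrite nz0.
rewrite /upd /sgn /= sum_upd.
case: (phi1_fst (x.2 i, x.1 i)) => -> /=.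
  have -> : \sum_(j < t) x.2 j + (x.2 i + 1 - x.2 i) = \sum_(j < t) x.2 j + 1 by ring.
  by rewrite odd_succ negbK; case: ifP.
have -> : \sum_(j < t) x.2 j + (x.2 i - 1 - x.2 i) = \sum_(j < t) x.2 j - 1 by ring.
by rewrite odd_pred negbK; case: ifP.
Qed.

Definition x0 : {ffun 'I_t -> seq nat} * {ffun 'I_t -> int} := ([ffun _ => [::]], [ffun _ => 0]).

Lemma wPF_pos x : isP x.1 -> x != x0 -> 0 < wPF x.
Proof.
move=> /forallP H nx.
have [i nzi] : exists i, nzc x i.
  apply/existsP; apply: contraR nx => /existsPn N; apply/eqP.
  case: x H N => mu f /= H N; congr pair; apply/ffunP => i; rewrite ffunE;
    by have := N i; rewrite /nzc negbK /= => /eqP [].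
rewrite wPFE (bigD1 i) //.
have p1 := wt1_pos (H i) nzi.
have p2 : 0 <= \sum_(j < t | j != i) C j * wt1 (x.2 j, x.1 j).
  apply: sumr_ge0 => j _; apply: mulr_ge0; last exact: wt1_ge0.
  by have := hC j; lia.
change (0 < C i * wt1 (x.2 i, x.1 i) + \sum_(j < t | j != i) C j * wt1 (x.2 j, x.1 j)).
have p3 : wt1 (x.2 i, x.1 i) <= C i * wt1 (x.2 i, x.1 i).
  by rewrite ler_peMl ?hC //; apply: wt1_ge0.
apply: (lt_le_trans p1); apply: (le_trans p3); by rewrite lerDl.
Qed.

Lemma Phi_nz x : isP x.1 -> x != x0 -> exists i, nzc x i.
Proof.
move=> H nx; apply/existsP; apply: contraR nx => /existsPn N; apply/eqP.
case: x H N => mu f /= H N; congr pair; apply/ffunP => i; rewrite ffunE;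
  by have := N i; rewrite /nzc negbK /= => /eqP [].
Qed.

Lemma term_le_sum (a : 'I_t -> int) j : (forall i, 0 <= a i) -> a j <= \sum_(i < t) a i.
Proof.
move=> H; rewrite (bigD1 j) //=.
change (a j <= a j + \sum_(i < t | i != j) a i); rewrite lerDl.
by apply: sumr_ge0.
Qed.

Definition UP M := UF t (UL M).
Definition UFI M := UF t (UI M).

Lemma wP_ge0 mu : 0 <= wP mu.
Proof. by apply: sumr_ge0 => i _; apply: mulr_ge0 => //; have := hC i; lia. Qed.

Lemma wF_ge0 f : 0 <= wF f.
Proof. by apply: sumr_ge0 => i _; apply: mulr_ge0; [have := hC i; lia | apply: pent_ge0]. Qed.

Lemma mem_UP (M : nat) mu : isP mu -> wP mu <= M%:Z -> mu \in UP M.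
Proof.
move=> /forallP H HM; apply: mem_UF => i; apply: mem_UL; first exact: H.
have h1 := @term_le_sum (fun i => C i * (sumn (mu i))%:Z) i.
have h2 : (sumn (mu i))%:Z <= C i * (sumn (mu i))%:Z by rewrite ler_peMl ?hC.
suff hh : (sumn (mu i))%:Z <= M%:Z by rewrite lez_nat in hh.
apply: (le_trans h2); apply: le_trans HM; apply: h1 => j.
by apply: mulr_ge0 => //; have := hC j; lia.
Qed.

Lemma mem_UFI (M : nat) f : wF f <= M%:Z -> f \in UFI M.
Proof.
move=> HM; apply: mem_UF => i; apply: mem_UI.
have h1 := @term_le_sum (fun i => C i * pent (f i)) i.
have h2 : pent (f i) <= C i * pent (f i) by rewrite ler_peMl ?hC ?pent_ge0.
have h3 := pent_ge (f i).
suff hh : pent (f i) <= M%:Z by exact: le_trans h3 hh.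
apply: (le_trans h2); apply: le_trans HM; apply: h1 => j.
by apply: mulr_ge0; [have := hC j; lia | apply: pent_ge0].
Qed.

Definition pc (j : int) := ncard (fun mu => isP mu /\ wP mu = j).

Lemma pc_sum (M : nat) j : j <= M%:Z ->
  (pc j)%:Z = \sum_(mu <- UP M) ind (isP mu) * ind (wP mu == j).
Proof.
move=> jM; rewrite /pc (@ncard_seq _ _ (UP M) (fun mu => isP mu && (wP mu == j))).
- by rewrite count_ind; apply: eq_bigr => mu _; rewrite ind_and.
- exact: UF_uniq.
- move=> mu; split => [[H1 H2]|/andP [_ /andP [H1 /eqP H2]]] //.
  by rewrite mem_UP // ?H1 ?H2 ?eqxx //.
Qed.

Definition Fc b n := ncard (Fset C b 0 n).
Definition Ef n : int := (Fc false n)%:Z - (Fc true n)%:Z.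

Lemma Fc_sum (M : nat) b n : n <= M%:Z ->
  (Fc b n)%:Z = \sum_(f <- UFI M) ind ((~~ (2 %| \sum_(i < t) f i)%Z) == b) * ind (wF f == n).
Proof.
move=> nM; rewrite /Fc (@ncard_seq _ _ (UFI M)
   (fun f => ((~~ (2 %| \sum_(i < t) f i)%Z) == b) && (wF f == n))).
- by rewrite count_ind; apply: eq_bigr => mu _; rewrite ind_and.
- exact: UF_uniq.
- move=> f; rewrite /Fset addr0; split => [[H1 H2]|/andP [_ /andP [/eqP H1 /eqP H2]]] //.
  have wn : wF f = n := H2.
  by rewrite wn H1 !eqxx !andbT; apply: mem_UFI; rewrite wn.
Qed.

Lemma Ef_sum (M : nat) n : n <= M%:Z ->
  Ef n = \sum_(f <- UFI M) sgn f * ind (wF f == n).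
Proof.
move=> nM; rewrite /Ef !(Fc_sum _ nM) -sumrB; apply: eq_bigr => f _.
rewrite /sgn /ind; case: (~~ _) => /=; case: (wF f == n) => /=; ring.
Qed.
Lemma wPF_x0 : wPF x0 = 0.
Proof.
rewrite wPFE big1 // => i _; rewrite /x0 /= !ffunE /wt1 /= /pent mul0r div0z; ring.
Qed.

Lemma isP_x0 : isP x0.1.
Proof. by apply/forallP => i; rewrite ffunE. Qed.

Lemma sgn_x0 : sgn x0.2 = 1.
Proof. by rewrite /sgn big1 ?dvdz0 // => i _; rewrite ffunE. Qed.

Lemma pent_conv (n : nat) :
  \sum_(j < n.+1) (pc j%:Z)%:Z * Ef ((n - j)%N%:Z) = (n == 0%N)%:R.
Proof.
set r := map Posz (iota 0 n.+1).
have ur : uniq r by rewrite map_inj_uniq ?iota_uniq // => a b [].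
have step1 : \sum_(j < n.+1) (pc j%:Z)%:Z * Ef ((n - j)%N%:Z) =
   \sum_(j <- r) (\sum_(mu <- UP n) ind (isP mu) * ind (wP mu == j)) *
                 (\sum_(f <- UFI n) sgn f * ind (wF f == n%:Z - j)).
  rewrite big_map -(big_mkord xpredT (fun j => (pc j%:Z)%:Z * Ef ((n - j)%N%:Z))).
  rewrite /index_iota subn0; apply: eq_big_seq => j; rewrite mem_iota => jn.
  have jn' : (j <= n)%N by lia.
  rewrite (@pc_sum n) ?lez_nat // (@Ef_sum n) ?lez_nat ?leq_subr //.
  by rewrite subzn.
rewrite step1 big_weight //.
have step2 : \sum_(mu <- UP n) \sum_(f <- UFI n)
    ind (isP mu) * sgn f * ind (wP mu \in r) * ind (wP mu + wF f == n%:Z) =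
  \sum_(x <- [seq (mu, f) | mu <- UP n, f <- UFI n] | isP x.1 && (wPF x == n%:Z)) sgn x.2.
  rewrite [RHS]big_mkcond [RHS]big_allpairs; apply: eq_bigr => mu _; apply: eq_bigr => f _ /=.
  rewrite /wPF /=; case Hp: (isP mu) => /=; last by rewrite /ind; ring.
  case He: (wP mu + wF f == n%:Z) => /=; last by rewrite /ind; ring.
  have -> : wP mu \in r.
    have h1 := wP_ge0 mu; have h2 := wF_ge0 f; move/eqP: He => He.
    apply/mapP; exists (absz (wP mu)); last by rewrite gez0_abs.
    rewrite mem_iota; apply/andP; split => //.
    rewrite add0n ltnS -lez_nat gez0_abs //; lia.
  by rewrite /ind; ring.
rewrite step2 -big_filter.
set s := filter _ _.
have us : uniq s.
  apply: filter_uniq; apply: allpairs_uniq; rewrite ?UF_uniq //.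
  by move=> [a b] [c d] _ _ /= [-> ->].
have mem_s : forall y, (y \in s) = isP y.1 && (wPF y == n%:Z).
  move=> [mu f]; rewrite mem_filter andbC; case H: (isP _ && _); last by rewrite andbF.
  case/andP: H => H1 /eqP H2.
  have h1 := wP_ge0 mu; have h2 := wF_ge0 f; move: H2; rewrite /wPF /= => H2.
  rewrite andbT; apply/allpairsP; exists (mu, f) => /=; split => //.
    by apply: mem_UP => //; lia.
  by apply: mem_UFI; lia.
case: (eqVneq n 0%N) => [n0|npos].
  have pe : perm_eq s [:: x0].
    apply: uniq_perm => // y; rewrite mem_s inE.
    apply/idP/idP => [/andP [H1 /eqP H2]|/eqP ->]; last by rewrite isP_x0 wPF_x0 n0 eqxx.
    apply/negPn/negP => ny; have := wPF_pos H1 ny; rewrite H2 n0; lia.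
  by rewrite (perm_big _ pe) big_seq1 sgn_x0.

apply: (@inv_sum _ s Phi (fun x => sgn x.2)) => // x; rewrite mem_s => /andP [H1 H2].
- by rewrite mem_s isP_Phi // wPF_Phi.
- exact: Phi_K.
- apply: sgn_Phi => //; apply: Phi_nz => //; apply/negP => /eqP ex.
  by move: H2; rewrite ex wPF_x0 eq_sym; lia.
Qed.
Section DPart.
Variable X : 'I_t -> int.
Hypothesis hX : forall i, 0 <= X i /\ 2 * X i <= C i.

Definition wD (d : {ffun 'I_t -> int}) :=
  \sum_(i < t) C i * binom2 (d i) + \sum_(i < t) X i * d i.
Definition oddD (d : {ffun 'I_t -> int}) := ~~ (2 %| \sum_(i < t) d i)%Z.
Definition UD M := UF t (UI M.+1).

Lemma wDE d : wD d = \sum_(i < t) (C i * binom2 (d i) + X i * d i).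
Proof. by rewrite /wD big_split. Qed.

Lemma wD_ge0 d : 0 <= wD d.
Proof.
rewrite wDE; apply: sumr_ge0 => i _; have [h1 h2] := hX i; exact: term_ge0 (hC i).
Qed.

Lemma mem_UD (M : nat) d : wD d <= M%:Z -> d \in UD M.
Proof.
move=> HM; apply: mem_UF => i; apply: mem_UI.
have [h1 h2] := hX i.
have h3 := term_ge (d i) h1 h2 (hC i).
have h4 := @term_le_sum (fun i => C i * binom2 (d i) + X i * d i) i.
have : C i * binom2 (d i) + X i * d i <= M%:Z.
  apply: le_trans HM; rewrite wDE; apply: h4 => j.
  by have [g1 g2] := hX j; exact: term_ge0 (hC j).
move: h3; move: (C i * binom2 (d i) + X i * d i) => w h3 h5.
have e : (M.+1)%:Z = M%:Z + 1 by rewrite -addn1 PoszD.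
have hh : (`|d i|)%:Z <= M%:Z + 1 by lia.
by rewrite e.
Qed.

Lemma Dset_sum (c : int) (M : nat) n : n - c <= M%:Z ->
  (ncard (Dset C X c n))%:Z = \sum_(d <- UD M) ind (oddD d) * ind (wD d == n - c).
Proof.
move=> nM; rewrite (@ncard_seq _ _ (UD M) (fun d => oddD d && (wD d == n - c))).
- by rewrite count_ind; apply: eq_bigr => d _; rewrite ind_and.
- exact: UF_uniq.
- move=> d; rewrite /Dset; split => [[H1 H2]|/andP [_ /andP [H1 /eqP H2]]].
    have wn : wD d = n - c by rewrite /wD -H2; ring.
    have ho : oddD d := H1.
    by rewrite ho wn eqxx !andbT; apply: mem_UD; rewrite wn.
  by split => //; have : wD d = n - c := H2; rewrite /wD => ->; ring.
Qed.

Lemma S_conv (c L : int) (i : nat) : L <= c ->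
  (ncard (PDset C X c (i%:Z + L)))%:Z =
  \sum_(j < i.+1) (pc j%:Z)%:Z * (ncard (Dset C X c ((i - j)%N%:Z + L)))%:Z.
Proof.
move=> Lc.
set r := map Posz (iota 0 i.+1).
have ur : uniq r by rewrite map_inj_uniq ?iota_uniq // => a b [].
set N := i%:Z + L.
have step1 : \sum_(j < i.+1) (pc j%:Z)%:Z * (ncard (Dset C X c ((i - j)%N%:Z + L)))%:Z =
   \sum_(j <- r) (\sum_(mu <- UP i) ind (isP mu) * ind (wP mu == j)) *
                 (\sum_(d <- UD i) ind (oddD d) * ind (wD d == (N - c) - j)).
  rewrite big_map -(big_mkord xpredT
     (fun j => (pc j%:Z)%:Z * (ncard (Dset C X c ((i - j)%N%:Z + L)))%:Z)).
  rewrite /index_iota subn0; apply: eq_big_seq => j; rewrite mem_iota => jn.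
  have jn' : (j <= i)%N by lia.
  rewrite (@pc_sum i) ?lez_nat // (@Dset_sum c i); last by rewrite -subzn //; lia.
  congr (_ * _); apply: eq_bigr => d _; congr (_ * ind (_ == _)).
  by rewrite /N -subzn //; ring.
rewrite step1 big_weight //.
rewrite (@ncard_seq _ _ [seq (mu, d) | mu <- UP i, d <- UD i]
   (fun x => isP x.1 && oddD x.2 && (wP x.1 + wD x.2 == N - c))).
- rewrite count_ind big_allpairs; apply: eq_bigr => mu _; apply: eq_bigr => d _ /=.
  case Hp: (isP mu) => /=; last by rewrite /ind; ring.
  case Ho: (oddD d) => /=; last by rewrite /ind; ring.
  case He: (wP mu + wD d == N - c) => /=; last by rewrite /ind; ring.
  have -> : wP mu \in r.
    have h1 := wP_ge0 mu; have h2 := wD_ge0 d; move/eqP: He => He.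
    apply/mapP; exists (absz (wP mu)); last by rewrite gez0_abs.
    rewrite mem_iota; apply/andP; split => //.
    rewrite add0n ltnS -lez_nat gez0_abs //; rewrite /N in He; lia.
  by rewrite /ind; ring.
- apply: allpairs_uniq; rewrite ?UF_uniq //.
  by move=> [a b] [e f] _ _ /= [-> ->].
- move=> [mu d]; rewrite /PDset /=; split.
    move=> [H1 H2 H3].
    have hp : isP mu by apply/forallP.
    have he : wP mu + wD d = N - c by rewrite /wP /wD -H3; ring.
    have ho : oddD d := H2.
    rewrite hp ho he eqxx /= andbT.
    have h1 := wP_ge0 mu; have h2 := wD_ge0 d.
    apply/allpairsP; exists (mu, d) => /=; split => //.
      by apply: mem_UP => //; rewrite /N in he; lia.
    by apply: mem_UD; rewrite /N in he; lia.
  move=> /andP [_ /andP [/andP [H1 H2] /eqP H3]]; split => //.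
    by apply/forallP.
  by move: H3; rewrite /wP /wD => H3; rewrite -[RHS](subrK c) -H3; ring.
Qed.
End DPart.
End Multi.
Definition eqmod (n : nat) (p q : {poly int}) := forall i, (i <= n)%N -> p`_i = q`_i.

Lemma eqmodM n p p' q : eqmod n p p' -> eqmod n (p * q) (p' * q).
Proof.
move=> H i hi; rewrite !coefM; apply: eq_bigr => j _; rewrite H //.
have := ltn_ord j; lia.
Qed.

Lemma eqmodMr n p q q' : eqmod n q q' -> eqmod n (p * q) (p * q').
Proof. by move=> H; rewrite ![p * _]mulrC; apply: eqmodM. Qed.

Lemma eqmod_trans n p q r : eqmod n p q -> eqmod n q r -> eqmod n p r.
Proof. by move=> H1 H2 i hi; rewrite H1 ?H2. Qed.

Lemma eqmod_sym n p q : eqmod n p q -> eqmod n q p.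
Proof. by move=> H i hi; rewrite H. Qed.

Lemma conv_core (pcf Ef a s : nat -> int) (c : int) (K : nat) :
  (forall i, \sum_(j < i.+1) pcf j * Ef (i - j)%N = (i == 0%N)%:R) ->
  (forall i, s i = \sum_(j < i.+1) pcf j * a (i - j)%N) ->
  ((forall i, s i = c * (i == K)%:R) <->
   (forall i, a i = if (i < K)%N then 0 else c * Ef (i - K)%N)).
Proof.
move=> HE HS.
have key n : let Pp := \poly_(j < n.+1) pcf j in
             let Ep := \poly_(j < n.+1) Ef j in
             let Ap := \poly_(j < n.+1) a j in
             let Sp := \poly_(j < n.+1) s j in
     eqmod n (Pp * Ap) Sp /\ eqmod n (Pp * Ep) 1.
  move=> Pp Ep Ap Sp; split => i hi.
    rewrite coefM coef_poly ltnS hi HS; apply: eq_bigr => j _.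
    have := ltn_ord j => hj.
    by rewrite !coef_poly !ltnS; rewrite (leq_trans _ hi) ?(leq_trans (leq_subr _ _) hi) //.
  rewrite coefM coef1 -HE; apply: eq_bigr => j _.
  have := ltn_ord j => hj.
  by rewrite !coef_poly !ltnS; rewrite (leq_trans _ hi) ?(leq_trans (leq_subr _ _) hi) //.
split => H n.
- have [k1 k2] := key n.
  set Pp := \poly_(j < n.+1) pcf j in k1 k2.
  set Ep := \poly_(j < n.+1) Ef j in k2.
  set Ap := \poly_(j < n.+1) a j in k1.
  set Sp := \poly_(j < n.+1) s j in k1.
  have hS : eqmod n Sp (c%:P * 'X^K).
    move=> i hi; rewrite coef_poly ltnS hi H coefMXn coefC.
    case: (ltngtP i K) => [h|h|->].
    - by rewrite mulr0.
    - by rewrite subn_eq0 leqNgt h /= mulr0.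
    - by rewrite subnn /= mulr1.
  have h1 : eqmod n Ap (Ep * (c%:P * 'X^K)).
    apply: (@eqmod_trans _ _ (Ep * Pp * Ap)).
      rewrite -{1}(mul1r Ap); apply: eqmodM.
      by apply: eqmod_sym; rewrite mulrC.
    rewrite -mulrA; apply: eqmodMr; exact: eqmod_trans k1 hS.
  have := h1 n (leqnn n); rewrite coef_poly ltnSn => ->.
  rewrite mulrA coefMXn; case: ltnP => // h.
  by rewrite coefMC coef_poly ltnS leq_subr mulrC.
- have [k1 k2] := key n.
  set Pp := \poly_(j < n.+1) pcf j in k1 k2.
  set Ep := \poly_(j < n.+1) Ef j in k2.
  set Ap := \poly_(j < n.+1) a j in k1.
  set Sp := \poly_(j < n.+1) s j in k1.
  have hA : eqmod n Ap (Ep * c%:P * 'X^K).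
    move=> i hi; rewrite coef_poly ltnS hi H coefMXn.
    case: ltnP => // h; rewrite coefMC coef_poly ltnS.
    by rewrite (leq_trans (leq_subr _ _) hi) mulrC.
  have h1 : eqmod n Sp (c%:P * 'X^K).
    apply: eqmod_trans (eqmod_sym k1) _.
    apply: (@eqmod_trans _ _ (Pp * (Ep * c%:P * 'X^K))); first exact: eqmodMr.
    have e1 : Pp * (Ep * c%:P * 'X^K) = Pp * Ep * (c%:P * 'X^K) by rewrite !mulrA.
    rewrite e1 -{2}(mul1r (c%:P * 'X^K)); exact: eqmodM.
  have := h1 n (leqnn n); rewrite coef_poly ltnSn => ->.
  rewrite coefMXn coefC; case: (ltngtP n K) => [h|h|->].
  - by rewrite mulr0.
  - by rewrite subn_eq0 leqNgt h /= mulr0.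
  - by rewrite subnn /= mulr1.
Qed.
Lemma least_empty (P : int -> Prop) (X : eqType) (Q : int -> X -> Prop) N0 N :
  (forall N, P N <-> exists x, Q N x) -> is_least P N0 -> N < N0 -> ncard (Q N) = 0%N.
Proof.
move=> HP [_ Hmin] NN0; apply: ncard0 => x Hx.
have : N0 <= N by apply: Hmin; apply/HP; exists x.
lia.
Qed.

Lemma Fc_neg t (C : 'I_t -> int) (hC : forall i, 1 <= C i) b z : z < 0 -> Fc C b z = 0%N.
Proof.
move=> z0; apply: ncard0 => f [_ H]; have := wF_ge0 hC f.
have : wF C f = z by rewrite -H addr0.
lia.
Qed.

Lemma Dset_neg t (C X : 'I_t -> int) (hC : forall i, 1 <= C i)
  (hX : forall i, 0 <= X i /\ 2 * X i <= C i) c N : N < c -> ncard (Dset C X c N) = 0%N.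
Proof.
move=> Nc; apply: ncard0 => d [_ H]; have := wD_ge0 hC hX d.
have : wD C X d + c = N by rewrite -H.
lia.
Qed.

Lemma Fset_shift t (C : 'I_t -> int) b k N : ncard (Fset C b k N) = Fc C b (N - k).
Proof.
apply: ncard_ext => f; rewrite /Fset; split => -[h1 h2]; split => //; lia.
Qed.

Theorem lemma3p8 (t : nat) (C A B : 'I_t -> int) (m k : int) :
  (1 <= t)%N ->
  (forall i, 1 <= C i) ->
  (forall i, 0 <= A i /\ 2 * A i <= C i) ->
  (forall i, 0 <= B i /\ 2 * B i <= C i) ->
  (exists N0, is_least (fun N => exists x, PDset C B m N x) N0 /\
              is_second_least (fun N => exists x, PDset C A 0 N x) N0) ->
  is_least (fun N => exists x, PDset C A 0 N x) k ->
  ((forall N, k < N -> ncard (PDset C A 0 N) = ncard (PDset C B m N)) <->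
   (forall N, u_N C A k N = v_N C A B m k N)).
Proof.
move=> t1 hC hA hB [N0 [TN0 [_ [k' [Sk' k'N0 _]]]]] Sk.
have kk' : k' = k.
  case: Sk' => [h1 h2]; case: Sk => [h3 h4].
  have := h2 _ h3; have := h4 _ h1; lia.
subst k'.
have k0 : 0 <= k.
  case: Sk => [[x [_ _ H]] _].
  have h1 := wP_ge0 hC x.1; have h2 := wD_ge0 hC hA x.2.
  have : wP C x.1 + wD C A x.2 = k by rewrite -H /wP /wD addr0 addrA.
  lia.
have Sempty N : N < k -> ncard (PDset C A 0 N) = 0%N.
  by apply: least_empty Sk => M.
have Tempty N : N < N0 -> ncard (PDset C B m N) = 0%N.
  by apply: least_empty TN0 => M.
set L : int := - `|m|%:Z.
have L0 : L <= 0 by rewrite /L; lia.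
have Lm : L <= m by rewrite /L; lia.
set c := ncard (PDset C A 0 k).
set K := absz (k - L).
have KE : K%:Z = k - L by rewrite /K gez0_abs //; lia.
pose pcf (j : nat) := (pc C j%:Z)%:Z.
pose Efn (j : nat) := Ef C j%:Z.
pose an (j : nat) := (ncard (Dset C A 0 (j%:Z + L)))%:Z - (ncard (Dset C B m (j%:Z + L)))%:Z.
pose sn (j : nat) := (ncard (PDset C A 0 (j%:Z + L)))%:Z - (ncard (PDset C B m (j%:Z + L)))%:Z.
have HS : forall i, sn i = \sum_(j < i.+1) pcf j * an (i - j)%N.
  move=> i; rewrite /sn (S_conv hC hA i L0) (S_conv hC hB i Lm) -sumrB.
  by apply: eq_bigr => j _; rewrite /an /pcf mulrBr.
have core := @conv_core pcf Efn an sn c%:Z K (pent_conv hC) HS.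
have LHS_E : (forall N, k < N -> ncard (PDset C A 0 N) = ncard (PDset C B m N)) <->
             (forall i, sn i = c%:Z * (i == K)%:R).
  split => H.
    move=> i; rewrite /sn.
    have [iK|iK] := eqVneq i K.
      have -> : i%:Z + L = k by rewrite ?iK KE; ring.
      by rewrite (Tempty k) // ?iK ?eqxx mulr1 subr0.
    rewrite mulr0.
    have [lt|ge] := ltP k (i%:Z + L).
      by rewrite H // subrr.
    have lt : i%:Z + L < k.
      rewrite lt_neqAle ge andbT; apply: contra iK => /eqP e.
      have h : i%:Z = K%:Z by rewrite KE -e; ring.
      by case: h => ->.
    by rewrite Sempty // Tempty //; lia.
  move=> N kN.
  have := H (absz (N - L)).
  have e : (absz (N - L))%:Z + L = N by rewrite gez0_abs; [ring | lia].
  have ne : (absz (N - L) == K) = false.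
    apply/negP => /eqP e2; have : (absz (N - L))%:Z = K%:Z by rewrite e2.
    rewrite KE gez0_abs; lia.
  rewrite /sn e ne mulr0 => /eqP; rewrite subr_eq0 => /eqP; by case.
have RHS_E : (forall N, u_N C A k N = v_N C A B m k N) <->
             (forall i, an i = if (i < K)%N then 0 else c%:Z * Efn (i - K)%N).
  have uvE N : ((u_N C A k N)%:Z = (v_N C A B m k N)%:Z) <->
       ((ncard (Dset C A 0 N))%:Z - (ncard (Dset C B m N))%:Z = c%:Z * Ef C (N - k)).
    rewrite /u_N /v_N !Fset_shift /Ef !PoszD !PoszM -/c.
    split => H; lia.
  split => H.
    move=> i; have /uvE := congr1 Posz (H (i%:Z + L)); rewrite /an => ->.
    case: ltnP => h.
      by rewrite /Ef !Fc_neg //; [ring | lia | lia].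
    by rewrite /Efn; congr (_ * Ef C _); rewrite -subzn //; lia.
  move=> N; apply/eqP; rewrite -eqz_nat; apply/eqP; apply/uvE.
  have [NL|NL] := ltP N L.
    rewrite !Dset_neg // /Ef ?Fc_neg //; try lia; ring.
  have e : (absz (N - L))%:Z + L = N by rewrite gez0_abs; [ring | lia].
  have := H (absz (N - L)); rewrite /an e => ->.
  case: ltnP => h.
    by rewrite /Ef !Fc_neg //; [ring | lia | lia].
  by rewrite /Efn; congr (_ * Ef C _); rewrite -subzn //; lia.
by rewrite LHS_E RHS_E.
Qed.
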